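(* Let $M$ be a matroid. If $M$ has two distinct bases that are disjoint, or its dual $M^\star$ has two distinct bases that are disjoint, then $M$ has the Borsuk property.
   Context: All matroids are finite. For a matroid $M$, $\mathcal{B}(M)$ denotes its set of bases, and the distance between two bases $B,B'$ is $|B\triangle B'|$ (symmetric difference); $\operatorname{diam}$ denotes the diameter with respect to this distance. The Borsuk number $f(M)$ is the minimum number of parts in a partition of $\mathcal{B}(M)$ in which every part has diameter strictly smaller than $\operatorname{diam}(\mathcal{B}(M))$; if $M$ has exactly one basis, $f(M):=+\infty$. If $M$ has $n$ elements and $c$ connected components, $M$ has the Borsuk property if $f(M)\le n-c+1$. *)

(* Defs.v *)
From mathcomp Require Import all_boot.
Set Implicit Arguments.
Unset Strict Implicit.
Unset Printing Implicit Defensive.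

Section Matroid.
Variable E : finType.

Definition matroid_bases (B : {set {set E}}) : Prop :=
  B != set0 /\
  forall B1 B2, B1 \in B -> B2 \in B -> forall x, x \in B1 :\: B2 ->
    exists2 y, y \in B2 :\: B1 & (y |: (B1 :\ x)) \in B.

Definition dual_bases (B : {set {set E}}) : {set {set E}} :=
  [set ~: X | X in B].

Definition independent (B : {set {set E}}) (I : {set E}) : bool :=
  [exists X in B, I \subset X].

Definition circuit (B : {set {set E}}) (C : {set E}) : bool :=
  ~~ independent B C && [forall D : {set E}, (D \proper C) ==> independent B D].

Definition same_comp (B : {set {set E}}) (x y : E) : bool :=
  (x == y) || [exists C, circuit B C && (x \in C) && (y \in C)].

Definition ncomp (B : {set {set E}}) : nat :=
  #|[set [set y | same_comp B x y] | x : E]|.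

Definition bdist (X Y : {set E}) : nat := #|(X :\: Y) :|: (Y :\: X)|.

Definition diam (A : {set {set E}}) : nat :=
  \max_(X in A) \max_(Y in A) bdist X Y.

(* f(M) <= m : some partition of the bases into at most m parts,
   each of diameter strictly smaller than diam(B(M)). *)
Definition borsuk_le (B : {set {set E}}) (m : nat) : Prop :=
  exists P : {set {set {set E}}},
    [/\ partition P B, #|P| <= m & forall A, A \in P -> diam A < diam B].

Definition borsuk_property (B : {set {set E}}) : Prop :=
  borsuk_le B (#|E| - ncomp B + 1).

Definition has_two_disjoint_bases (B : {set {set E}}) : Prop :=
  exists B1 B2, [/\ B1 \in B, B2 \in B, B1 != B2 & [disjoint B1 & B2]].

End Matroid.

(* Main.v *)
Require Import Defs.
From mathcomp Require Import all_boot.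
From mathcomp Require Import zify.
Set Implicit Arguments. Unset Strict Implicit. Unset Printing Implicit Defensive.

Lemma basis_sub (E : finType) (B : {set {set E}}) : matroid_bases B ->
  forall X Y, X \in B -> Y \in B -> X \subset Y -> X = Y.
Proof.
move=> [_ hex] X Y hX hY sXY; apply/eqP; rewrite eqEsubset sXY /=.
apply/subsetP => y yY; apply/negPn/negP => yX.
have hy : y \in Y :\: X by rewrite inE yX yY.
have [z] := hex Y X hY hX y hy.
by rewrite inE => /andP[/negP zY /(subsetP sXY)].
Qed.

Lemma card_bases (E : finType) (B : {set {set E}}) : matroid_bases B ->
  forall X Y, X \in B -> Y \in B -> #|X| = #|Y|.
Proof.
move=> hB X Y hX hY; have [_ hex] := hB.
move: {2}#|X :\: Y| (leqnn #|X :\: Y|) => k; elim: k X hX => [|k IH] X hX hk.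
  have: X :\: Y == set0 by rewrite -cards_eq0; lia.
  by rewrite setD_eq0 => /(basis_sub hB hX hY) ->.
case: (set_0Vmem (X :\: Y)) => [|[x xXY]].
  by move/eqP; rewrite setD_eq0 => /(basis_sub hB hX hY) ->.
have [y yYX hX'] := hex X Y hX hY x xXY.
move: xXY yYX; rewrite !inE => /andP[xY xX] /andP[yX yY].
rewrite -(IH _ hX').
  by rewrite cardsU1 !inE (negbTE yX) andbF (cardsD1 x X) xX.
have -> : (y |: (X :\ x)) :\: Y = (X :\: Y) :\ x.
  apply/setP => z; rewrite !inE; case: (z =P y) => [->|_]; first by rewrite yY /= andbF.
  by rewrite /=; case: (z \in X); case: (z \in Y); case: (z == x).
move: hk; rewrite (cardsD1 x (X :\: Y)) !inE xY xX /=; lia.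
Qed.

Lemma extend_basis (E : finType) (B : {set {set E}}) : matroid_bases B ->
  forall I B0 Y : {set E}, B0 \in B -> I \subset B0 -> Y \in B ->
  exists2 Bs, Bs \in B & (I \subset Bs) && (Bs \subset I :|: Y).
Proof.
move=> [_ hex] I B0 Y hB0 sI hY.
move: {2}#|B0 :\: (I :|: Y)| (leqnn #|B0 :\: (I :|: Y)|) => k.
elim: k B0 hB0 sI => [|k IH] B0 hB0 sI hk.
  exists B0 => //; rewrite sI /= -setD_eq0 -cards_eq0; lia.
case: (set_0Vmem (B0 :\: (I :|: Y))) => [/eqP|[x xX]].
  by rewrite setD_eq0 => s; exists B0 => //; rewrite sI.
have xBY : x \in B0 :\: Y by move: xX; rewrite !inE; case/andP=> /norP[_ ->].
have [y yYX hX'] := hex B0 Y hB0 hY x xBY.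
move: xX yYX; rewrite !inE => /andP[/norP[xI xY] xB] /andP[yB yY].
apply: (IH _ hX').
  apply/subsetP => z zI; rewrite !inE (subsetP sI) // andbT.
  by case: (z =P x) => [ezx|]; [rewrite -ezx zI in xI | rewrite orbT].
have -> : (y |: (B0 :\ x)) :\: (I :|: Y) = (B0 :\: (I :|: Y)) :\ x.
  apply/setP => z; rewrite !inE; case: (z =P y) => [->|_]; first by rewrite yY /= orbT andbF.
  by rewrite /=; case: (z \in B0); case: (z \in Y); case: (z == x); case: (z \in I).
move: hk; rewrite (cardsD1 x (B0 :\: (I :|: Y))) !inE (negbTE xI) (negbTE xY) xB /=; lia.
Qed.

Lemma indep_sub (E : finType) (B : {set {set E}}) (I J : {set E}) :
  I \subset J -> independent B J -> independent B I.
Proof.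
move=> sIJ /existsP[X /andP[hX sJ]]; apply/existsP; exists X.
by rewrite hX (subset_trans sIJ sJ).
Qed.

Lemma circuit_dep (E : finType) (B : {set {set E}}) (C : {set E}) :
  circuit B C -> ~~ independent B C.
Proof. by case/andP. Qed.

Lemma circuit_proper (E : finType) (B : {set {set E}}) (C D : {set E}) :
  circuit B C -> D \proper C -> independent B D.
Proof. by case/andP=> _ /forallP /(_ D) /implyP; apply. Qed.

Lemma circuit_sub (E : finType) (B : {set {set E}}) (C D : {set E}) :
  circuit B C -> circuit B D -> D \subset C -> D = C.
Proof.
move=> cC cD sDC; apply/eqP; apply/negPn/negP => nDC.
have : D \proper C by rewrite properEneq nDC.
by move/(circuit_proper cC); apply/negP; apply: circuit_dep.
Qed.

Lemma min_dep (E : finType) (B : {set {set E}}) (D : {set E}) :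
  ~~ independent B D -> exists2 C, circuit B C & C \subset D.
Proof.
move: {2}#|D| (leqnn #|D|) => k; elim: k D => [|k IH] D hk hD.
  have D0 : D = set0 by apply/eqP; rewrite -cards_eq0; lia.
  exists D => //; apply/andP; split => //; apply/forallP => F; apply/implyP.
  by rewrite D0 => /proper_card; rewrite cards0.
case hf: [forall F : {set E}, (F \proper D) ==> independent B F].
  by exists D => //; apply/andP; split.
move/negbT: hf; rewrite negb_forall => /existsP[F]; rewrite negb_imply => /andP[pF iF].
have [C cC sC] := IH F ltac:(have := proper_card pF; lia) iF.
by exists C => //; apply: (subset_trans sC (proper_sub pF)).
Qed.

Lemma basis_indep (E : finType) (B : {set {set E}}) X : X \in B -> independent B X.
Proof. by move=> hX; apply/existsP; exists X; rewrite hX subxx. Qed.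

Lemma unique_circ (E : finType) (B : {set {set E}}) : matroid_bases B ->
  forall X e C1 C2, X \in B -> e \notin X -> circuit B C1 -> circuit B C2 ->
  C1 \subset e |: X -> C2 \subset e |: X -> C1 = C2.
Proof.
move=> hB X e C1 C2 hX eX c1 c2 s1 s2.
apply/eqP; apply/negPn/negP => n12.
have eC2 : e \in C2.
  apply/negPn/negP => eC; have : independent B C2.
    apply: (indep_sub _ (basis_indep hX)); apply/subsetP => z zC.
    have := subsetP s2 z zC; rewrite !inE; case/orP => [ze|//]; move: eC; by rewrite -(eqP ze) zC.
  by apply/negP; apply: circuit_dep.
have /subsetPn[f fC1 fC2] : ~~ (C1 \subset C2).
  by apply/negP => s12; move: n12; rewrite (circuit_sub c2 c1 s12) eqxx.
have fe : f != e by apply/eqP => fe; rewrite fe eC2 in fC2.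
have fX : f \in X by have := subsetP s1 f fC1; rewrite !inE (negbTE fe).
have iC : independent B (C1 :\ f).
  apply: (circuit_proper c1); rewrite properEneq subsetDl andbT.
  by apply/eqP => /setP /(_ f); rewrite !inE eqxx fC1.
case/existsP: iC => B0 /andP[hB0 sB0].
have [Bs hBs /andP[sIBs sBs]] := extend_basis hB hB0 sB0 hX.
have eqBs : Bs = (e |: X) :\ f.
  apply/eqP; rewrite eqEcard; apply/andP; split.
    apply/subsetP => z zB; move: (subsetP sBs z zB); rewrite !inE.
    case/orP => [/andP[zf zC] | zX]; first by rewrite zf; have := subsetP s1 z zC; rewrite !inE.
    rewrite zX orbT andbT; apply/eqP => zf.
    have : C1 \subset Bs.
      apply/subsetP => w wC; case: (w =P f) => [->|wf]; first by rewrite -zf zB.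
      by apply: (subsetP sIBs); rewrite !inE wC andbT; apply/eqP.
    move/(fun s => indep_sub s (basis_indep hBs)); apply/negP; exact: circuit_dep.
  have := cardsD1 f (e |: X); rewrite cardsU1 !inE (negbTE eX) fX orbT /= (card_bases hB hBs hX).
  by move/eqP; rewrite eqn_add2l => /eqP <-.
have : C2 \subset Bs.
  rewrite eqBs; apply/subsetP => z zC; rewrite !inE; apply/andP; split; last by have := subsetP s2 z zC; rewrite !inE.
  by apply/eqP => zf; move: fC2; rewrite -zf zC.
move/(fun s => indep_sub s (basis_indep hBs)); apply/negP; exact: circuit_dep.
Qed.

Lemma weak_elim (E : finType) (B : {set {set E}}) : matroid_bases B ->
  forall C1 C2 e, circuit B C1 -> circuit B C2 -> C1 != C2 ->
  e \in C1 -> e \in C2 -> ~~ independent B ((C1 :|: C2) :\ e).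
Proof.
move=> hB C1 C2 e c1 c2 n12 e1 e2; apply/negP => /existsP[X /andP[hX sX]].
have eX : e \notin X.
  apply/negP => eX; have : C1 \subset X.
    apply/subsetP => z zC; have [->//|ze] := eqVneq z e.
    by apply: (subsetP sX); rewrite !inE ze zC.
  move/(fun s => indep_sub s (basis_indep hX)); apply/negP; exact: circuit_dep.
have sub (C : {set E}) : C \subset C1 :|: C2 -> C \subset e |: X.
  move=> sC; apply/subsetP => z zC; rewrite !inE; have [//|ze] := eqVneq z e; rewrite /=.
  by apply: (subsetP sX); rewrite !inE ze; have := subsetP sC z zC; rewrite !inE.
move: n12; rewrite (unique_circ hB hX eX c1 c2) ?eqxx //; apply: sub.
  exact: subsetUl.
exact: subsetUr.
Qed.

Lemma strong_elim (E : finType) (B : {set {set E}}) : matroid_bases B ->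
  forall C1 C2 e f, circuit B C1 -> circuit B C2 -> e \in C1 -> e \in C2 ->
  f \in C1 -> f \notin C2 ->
  exists2 C3, circuit B C3 & (f \in C3) && (C3 \subset (C1 :|: C2) :\ e).
Proof.
move=> hB C1 C2 e f.
move: {2}#|C1 :|: C2| (leqnn #|C1 :|: C2|) => k.
elim: k C1 C2 e f => [|k IH] C1 C2 e f hk c1 c2 e1 e2 f1 f2.
  have : #|C1 :|: C2| > 0 by apply/card_gt0P; exists e; rewrite inE e1.
  by move: hk; rewrite leqn0 => /eqP ->.
have n12 : C1 != C2 by apply/eqP => h; rewrite -h f1 in f2.
have [C3 c3 s3] := min_dep (weak_elim hB c1 c2 n12 e1 e2).
have [fC3|fC3] := boolP (f \in C3); first by exists C3 => //; rewrite fC3.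
have e3 : e \notin C3 by apply/negP => /(subsetP s3); rewrite !inE eqxx.
have /subsetPn[g g3 g1] : ~~ (C3 \subset C1).
  apply/negP => s31; have h := circuit_sub c1 c3 s31.
  by move: e3; rewrite h e1.
have g2 : g \in C2 by have := subsetP s3 g g3; rewrite !inE (negbTE g1) /=; case/andP.
have s3' : C3 \subset C1 :|: C2 by apply: subset_trans s3 (subsetDl _ _).
have lt1 : #|C2 :|: C3| <= k.
  have : #|C2 :|: C3| < #|C1 :|: C2|; last by move=> h; rewrite -ltnS (leq_trans h hk).
  apply: proper_card; rewrite properEneq; apply/andP; split.
    apply/eqP => /setP /(_ f); rewrite !inE f1 (negbTE f2) (negbTE fC3) //.
  apply/subsetP => z; rewrite !inE; case/orP => [->|/(subsetP s3')]; rewrite ?orbT // !inE; exact: id.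
have [C4 c4 /andP[e4 s4]] := IH C2 C3 g e lt1 c2 c3 g2 g3 e2 e3.
have f4 : f \notin C4.
  apply/negP => /(subsetP s4); rewrite !inE (negbTE f2) (negbTE fC3); by case/andP.
have s4' : C4 \subset C1 :|: C2.
  apply/subsetP => z /(subsetP s4); rewrite !inE => /andP[_ /orP[->|/(subsetP s3')]];
  rewrite ?orbT // !inE; exact: id.
have lt2 : #|C1 :|: C4| <= k.
  have : #|C1 :|: C4| < #|C1 :|: C2|; last by move=> h; rewrite -ltnS (leq_trans h hk).
  apply: proper_card; rewrite properEneq; apply/andP; split.
    apply/eqP => /setP /(_ g); rewrite !inE g2 orbT (negbTE g1) /=.
    by move=> h; move: (subsetP s4 g h); rewrite !inE eqxx.
  apply/subsetP => z; rewrite !inE; case/orP => [->|/(subsetP s4')]; rewrite ?orbT // !inE; exact: id.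
have [C5 c5 /andP[f5 s5]] := IH C1 C4 e f lt2 c1 c4 e1 e4 f1 f4.
exists C5 => //; rewrite f5 /=; apply/subsetP => z /(subsetP s5); rewrite !inE.
case/andP => -> /=; case/orP => [->//|/(subsetP s4')]; by rewrite !inE.
Qed.

Lemma circ_trans (E : finType) (B : {set {set E}}) : matroid_bases B ->
  forall C1 x z, circuit B C1 -> x \in C1 -> z \notin C1 ->
  forall C, circuit B C -> z \in C -> C1 :&: C != set0 ->
  exists2 C', circuit B C' & (x \in C') && (z \in C').
Proof.
move=> hB C1 x z c1 x1 z1 C.
move: {2}#|C :\: C1| (leqnn #|C :\: C1|) => k.
elim: k C => [|k IH] C hk c zC m.
  have : #|C :\: C1| > 0 by apply/card_gt0P; exists z; rewrite inE z1.
  by move: hk; rewrite leqn0 => /eqP ->.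
have [xC|xC] := boolP (x \in C); first by exists C => //; rewrite xC.
case/set0Pn: m => w; rewrite inE => /andP[w1 wC].
have [C3 c3 /andP[x3 s3]] := strong_elim hB c1 c w1 wC x1 xC.
have [zC3|zC3] := boolP (z \in C3); first by exists C3 => //; rewrite x3.
have w3 : w \notin C3 by apply/negP => /(subsetP s3); rewrite !inE eqxx.
have /subsetPn[u u3 u1] : ~~ (C3 \subset C1).
  apply/negP => s31; have h := circuit_sub c1 c3 s31.
  by move: w3; rewrite h w1.
have uC : u \in C by have := subsetP s3 u u3; rewrite !inE (negbTE u1) /=; case/andP.
have [C4 c4 /andP[z4 s4]] := strong_elim hB c c3 uC u3 zC zC3.
have s4' : C4 :\: C1 \subset (C :\: C1) :\ u.
  apply/subsetP => y; rewrite !inE => /andP[y1 /(subsetP s4)]; rewrite !inE (negbTE y1) /=.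
  case/andP => -> /=; case/orP => // /(subsetP s3); rewrite !inE (negbTE y1) /=.
  by case/andP.
have lt : #|C4 :\: C1| <= k.
  have := subset_leq_card s4'; move: hk; rewrite (cardsD1 u (C :\: C1)) !inE u1 uC /=.
  by rewrite add1n ltnS => h1 h2; exact: leq_trans h2 h1.
apply: (IH C4 lt c4 z4); apply/negP => /eqP h0.
have n1 y : y \in C4 -> y \notin C1.
  move=> y4; apply/negP => y1; have : y \in C1 :&: C4 by rewrite inE y1 y4.
  by rewrite h0 inE.
have s4C : C4 \subset C.
  apply/subsetP => y y4; have := subsetP s4 y y4; rewrite !inE => /andP[_ /orP[//|/(subsetP s3)]].
  by rewrite !inE (negbTE (n1 y y4)) /=; case/andP.
have h := circuit_sub c c4 s4C.
by move: (n1 w); rewrite h wC w1 => /(_ isT).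
Qed.

Lemma same_comp_sym (E : finType) (B : {set {set E}}) x y :
  same_comp B x y = same_comp B y x.
Proof.
rewrite /same_comp eq_sym; congr (_ || _);
by apply/existsP/existsP => [] [C /andP[/andP[c xC] yC]]; exists C; rewrite c xC yC.
Qed.

Lemma same_comp_trans (E : finType) (B : {set {set E}}) : matroid_bases B ->
  forall x y z, same_comp B x y -> same_comp B y z -> same_comp B x z.
Proof.
move=> hB x y z; rewrite /same_comp.
case/orP => [/eqP -> //|/existsP[C1 /andP[/andP[c1 x1] y1]]].
case/orP => [/eqP <-|/existsP[C2 /andP[/andP[c2 y2] z2]]].
  by apply/orP; right; apply/existsP; exists C1; rewrite c1 x1 y1.
apply/orP; right; apply/existsP.
have [z1|z1] := boolP (z \in C1); first by exists C1; rewrite c1 x1 z1.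
have m : C1 :&: C2 != set0 by apply/set0Pn; exists y; rewrite inE y1 y2.
have [C c /andP[xC zC]] := circ_trans hB c1 x1 z1 c2 z2 m.
by exists C; rewrite c xC zC.
Qed.

Lemma class_eq (E : finType) (B : {set {set E}}) : matroid_bases B ->
  forall x z, same_comp B x z ->
  [set y | same_comp B z y] = [set y | same_comp B x y].
Proof.
move=> hB x z h; apply/setP => y; rewrite !inE; apply/idP/idP => h2.
  exact: same_comp_trans h h2.
by apply: (same_comp_trans hB _ h2); rewrite same_comp_sym.
Qed.

Lemma ncomp_le (E : finType) (B : {set {set E}}) : matroid_bases B ->
  forall x, ncomp B <= #|~: [set y | same_comp B x y]| + 1.
Proof.
move=> hB x; rewrite /ncomp.
set cl := fun z => [set y | same_comp B z y].
set K := [set y | same_comp B x y].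
have sub : [set cl z | z : E] \subset [set K] :|: cl @: (~: K).
  apply/subsetP => S /imsetP[z _ ->]; rewrite inE.
  case zK: (z \in K).
    apply/orP; left; rewrite inE; apply/eqP; rewrite /cl /K; apply: (class_eq hB); by move: zK; rewrite inE.
  by rewrite (imset_f cl) ?orbT // inE zK.
apply: (leq_trans (subset_leq_card sub)); rewrite addnC.
apply: (leq_trans (leq_card_setU _ _)); rewrite cards1 leq_add2l.
exact: leq_imset_card.
Qed.

Lemma circ_in (E : finType) (B : {set {set E}}) : matroid_bases B ->
  forall X x, X \in B -> x \notin X ->
  exists2 C, circuit B C & (x \in C) && (C \subset x |: X).
Proof.
move=> hB X x hX xX.
have dep : ~~ independent B (x |: X).
  apply/negP => /existsP[Y /andP[hY sY]].
  have sXY : X \subset Y by apply: subset_trans sY; apply: subsetUr.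
  have h := basis_sub hB hX hY sXY.
  by move: xX; rewrite h (subsetP sY) // !inE eqxx.
have [C c sC] := min_dep dep.
exists C => //; rewrite sC andbT; apply/negPn/negP => xC.
have : independent B C.
  apply: (indep_sub _ (basis_indep hX)); apply/subsetP => z zC.
  have := subsetP sC z zC; rewrite !inE; case/orP => // /eqP ezx.
  by move: xC; rewrite -ezx zC.
by apply/negP; apply: circuit_dep.
Qed.

Lemma diam_ge (E : finType) (A : {set {set E}}) X Y :
  X \in A -> Y \in A -> bdist X Y <= diam A.
Proof.
move=> hX hY; rewrite /diam.
apply: (leq_trans _ (leq_bigmax_cond _ hX)).
exact: (leq_bigmax_cond _ hY).
Qed.

Lemma borsuk_from (E : finType) (B : {set {set E}}) (K : {set E})
  (g : {set E} -> E) (m : nat) :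
  (forall X, X \in B -> g X \in K) ->
  (forall X Y, X \in B -> Y \in B -> g X = g Y -> bdist X Y <= m) ->
  m < diam B ->
  ncomp B <= #|~: K| + 1 ->
  borsuk_property B.
Proof.
move=> gK gd md nc; exists (preim_partition g B); split.
- exact: preim_partitionP.
- set F := fun z => [set y in B | z == g y].
  have sub : preim_partition g B \subset F @: K.
    apply/subsetP => S /imsetP[X hX ->]; apply/imsetP; exists (g X); first exact: gK.
    by [].
  have h1 := leq_trans (subset_leq_card sub) (leq_imset_card F K).
  have h2 : #|K| + #|~: K| = #|E| := cardsC K.
  move: h1 h2 nc; clear; move: (#|preim_partition g B|) (#|K|) (#|~: K|) (#|E|) (ncomp B) => a b c d e; lia.
- move=> A /imsetP[X hX ->].
  apply: (leq_ltn_trans _ md); apply/bigmax_leqP => Y; rewrite inE => /andP[hY /eqP eY].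
  apply/bigmax_leqP => Z; rewrite inE => /andP[hZ /eqP eZ].
  by apply: gd => //; rewrite -eY -eZ.
Qed.

Lemma bdist_le (E : finType) (X Y : {set E}) :
  bdist X Y <= #|X :\: Y| + #|Y :\: X|.
Proof. exact: leq_card_setU. Qed.

Lemma bdist_disj (E : finType) (X Y : {set E}) :
  [disjoint X & Y] -> bdist X Y = #|X| + #|Y|.
Proof.
move=> d; rewrite /bdist (setDidPl d).
have d' : [disjoint Y & X] by rewrite disjoint_sym.
rewrite (setDidPl d'); apply/eqP; by rewrite (leq_card_setU X Y).
Qed.

Lemma same_comp_refl (E : finType) (B : {set {set E}}) x : same_comp B x x.
Proof. by rewrite /same_comp eqxx. Qed.

Lemma circ_class (E : finType) (B : {set {set E}}) (C : {set E}) x :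
  circuit B C -> x \in C -> C \subset [set y | same_comp B x y].
Proof.
move=> c xC; apply/subsetP => y yC; rewrite inE /same_comp; apply/orP; right.
by apply/existsP; exists C; rewrite c xC yC.
Qed.

Theorem theorem1 (E : finType) (B : {set {set E}}) :
  matroid_bases B ->
  (has_two_disjoint_bases B \/ has_two_disjoint_bases (dual_bases B)) ->
  borsuk_property B.
Proof.
move=> hB [[B1 [B2 [h1 h2 n12 d12]]] | [D1 [D2 [h1 h2 n12 d12]]]].
- have c12 := card_bases hB h1 h2.
  have /set0Pn[x x1] : B1 != set0.
    apply/negP => /eqP e1; move: n12; rewrite e1.
    have : B2 == set0 by rewrite -cards_eq0 -c12 e1 cards0.
    by move/eqP ->; rewrite eqxx.
  set K := [set y | same_comp B x y].
  have meet X : X \in B -> X :&: K != set0.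
    move=> hX; apply/negP => /eqP h0.
    have xK : x \in K by rewrite inE same_comp_refl.
    have xX : x \notin X.
      apply/negP => xX; have : x \in X :&: K by rewrite inE xX xK.
      by rewrite h0 inE.
    have [C c /andP[xC sC]] := circ_in hB hX xX.
    have : independent B C.
      apply: (indep_sub _ (basis_indep h1)); apply/subsetP => z zC.
      have := subsetP sC z zC; rewrite !inE; case/orP => [/eqP -> //|zX].
      have zK : z \in K by apply: (subsetP (circ_class c xC)).
      have : z \in X :&: K by rewrite inE zX zK.
      by rewrite h0 inE.
    by apply/negP; apply: circuit_dep.
  pose g X := odflt x [pick z in X :&: K].
  have gP X : X \in B -> g X \in X :&: K.
    move=> /meet /set0Pn[z zXK]; rewrite /g; case: pickP => [y -> //|].
    by move/(_ z); rewrite zXK.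
  apply: (borsuk_from (K := K) (g := g) (m := (#|B1|.-1).*2)).
  + by move=> X /gP; rewrite inE; case/andP.
  + move=> X Y hX hY eXY; apply: (leq_trans (bdist_le X Y)).
    have := gP X hX; have := gP Y hY; rewrite -eXY !inE => /andP[gY _] /andP[gX _].
    have s1 : X :\: Y \subset X :\ g X by apply/subsetP => z; rewrite !inE => /andP[zY ->];
      rewrite andbT; apply/eqP => e; rewrite e gY in zY.
    have s2 : Y :\: X \subset Y :\ g X by apply/subsetP => z; rewrite !inE => /andP[zX ->];
      rewrite andbT; apply/eqP => e; rewrite e gX in zX.
    have := subset_leq_card s1; have := subset_leq_card s2.
    have := cardsD1 (g X) X; have := cardsD1 (g X) Y; rewrite gX gY.
    rewrite (card_bases hB hX h1) (card_bases hB hY h1) -muln2 !add1n.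
    move: #|B1| #|X :\ g X| #|Y :\ g X| #|X :\: Y| #|Y :\: X| => a b c d e; lia.
  + apply: (leq_trans _ (diam_ge h1 h2)); rewrite bdist_disj // -c12 addnn.
    have : 0 < #|B1| by apply/card_gt0P; exists x.
    rewrite -!muln2; move: #|B1| => a; clear; lia.
  + exact: ncomp_le.
- move: h1 h2 => /imsetP[X1 h1 eD1] /imsetP[X2 h2 eD2].
  have c12 := card_bases hB h1 h2.
  have cC X : X \in B -> #|~: X| = #|D1|.
    move=> hX; have := cardsC X; have := cardsC X1.
    rewrite eD1 (card_bases hB hX h1); move: #|X1| #|~: X| #|~: X1| #|E| => a b c d; clear; lia.
  have /set0Pn[x x1] : D1 != set0.
    apply/negP => /eqP e1; move: n12; rewrite e1.
    have : D2 == set0 by rewrite -cards_eq0 eD2 (cC X2 h2) e1 cards0.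
    by move/eqP ->; rewrite eqxx.
  have xX1 : x \notin X1 by move: x1; rewrite eD1 inE.
  set K := [set y | same_comp B x y].
  have miss X : X \in B -> K :\: X != set0.
    move=> hX; apply/negP; rewrite setD_eq0 => sKX.
    have [C c /andP[xC sC]] := circ_in hB h1 xX1.
    have : independent B C.
      apply: (indep_sub _ (basis_indep hX)).
      exact: subset_trans (circ_class c xC) sKX.
    by apply/negP; apply: circuit_dep.
  pose g X := odflt x [pick z in K :\: X].
  have gP X : X \in B -> g X \in K :\: X.
    move=> /miss /set0Pn[z zXK]; rewrite /g; case: pickP => [y -> //|].
    by move/(_ z); rewrite zXK.
  apply: (borsuk_from (K := K) (g := g) (m := (#|D1|.-1).*2)).
  + by move=> X /gP; rewrite inE; case/andP.
  + move=> X Y hX hY eXY; apply: (leq_trans (bdist_le X Y)).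
    have := gP X hX; have := gP Y hY; rewrite -eXY !inE => /andP[gY _] /andP[gX _].
    have s1 : X :\: Y \subset (~: Y) :\ g X by apply/subsetP => z; rewrite !inE => /andP[-> zX];
      rewrite andbT; apply/eqP => e; by rewrite -e zX in gX.
    have s2 : Y :\: X \subset (~: X) :\ g X by apply/subsetP => z; rewrite !inE => /andP[-> zY];
      rewrite andbT; apply/eqP => e; by rewrite -e zY in gY.
    have := subset_leq_card s1; have := subset_leq_card s2.
    have := cardsD1 (g X) (~: X); have := cardsD1 (g X) (~: Y); rewrite !inE gX gY.
    rewrite (cC X hX) (cC Y hY) -muln2 !add1n.
    move: #|D1| #|~: X :\ g X| #|~: Y :\ g X| #|X :\: Y| #|Y :\: X| => a b c d e; lia.
  + apply: (leq_trans _ (diam_ge h1 h2)).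
    have -> : bdist X1 X2 = bdist D2 D1.
      rewrite /bdist eD1 eD2; apply: eq_card => z; rewrite !inE.
      by case: (z \in X1); case: (z \in X2).
    rewrite bdist_disj 1?disjoint_sym // eD2 (cC X2 h2) addnn.
    have : 0 < #|D1| by apply/card_gt0P; exists x.
    rewrite -!muln2; move: #|D1| => a; clear; lia.
  + exact: ncomp_le.
Qed.
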